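(* Two elements $a,b\in C\ell_2\setminus\{0\}$ are pseudosimilar if and only if one of the following holds: (1) $\bar a+b=0$; (2) $H_a=H_b$ and $H_{\bar a+b}\neq 0$.
   Context: $C\ell_2$ is the 4-dimensional real associative algebra with basis $1,e_1,e_2,e_3$ and multiplication $e_1^2=e_2^2=1$, $e_3^2=-1$, $e_1e_2=e_3=-e_2e_1$, $e_1e_3=e_2=-e_3e_1$, $e_3e_2=e_1=-e_2e_3$. For $a=a_0+a_1e_1+a_2e_2+a_3e_3$ ($a_i\in\mathbb{R}$): $\bar a=a_0-a_1e_1-a_2e_2-a_3e_3$, $H_a=a\bar a=a_0^2-a_1^2-a_2^2+a_3^2$. $Z(C\ell_2)=\{a:H_a=0\}$. Elements $a,b$ are pseudosimilar if there exists $u\in C\ell_2\setminus Z(C\ell_2)$ with $au=\bar u b$. *)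

(* Defs.v *)
From Stdlib Require Import Reals.
Open Scope R_scope.

(* a = c0 + c1 e1 + c2 e2 + c3 e3 *)
Record Cl2 := mkCl2 { c0 : R; c1 : R; c2 : R; c3 : R }.

Definition cl_zero : Cl2 := mkCl2 0 0 0 0.

Definition cl_add (a b : Cl2) : Cl2 :=
  mkCl2 (c0 a + c0 b) (c1 a + c1 b) (c2 a + c2 b) (c3 a + c3 b).

(* Multiplication from e1^2 = e2^2 = 1, e3^2 = -1, e1e2 = e3 = -e2e1,
   e1e3 = e2 = -e3e1, e3e2 = e1 = -e2e3, extended bilinearly. *)
Definition cl_mul (a b : Cl2) : Cl2 :=
  mkCl2 (c0 a * c0 b + c1 a * c1 b + c2 a * c2 b - c3 a * c3 b)
        (c0 a * c1 b + c1 a * c0 b - c2 a * c3 b + c3 a * c2 b)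
        (c0 a * c2 b + c2 a * c0 b + c1 a * c3 b - c3 a * c1 b)
        (c0 a * c3 b + c3 a * c0 b + c1 a * c2 b - c2 a * c1 b).

Definition cl_bar (a : Cl2) : Cl2 := mkCl2 (c0 a) (- c1 a) (- c2 a) (- c3 a).

(* H_a = a0^2 - a1^2 - a2^2 + a3^2 (the scalar a * bar a) *)
Definition H (a : Cl2) : R :=
  c0 a ^ 2 - c1 a ^ 2 - c2 a ^ 2 + c3 a ^ 2.

Definition inZ (a : Cl2) : Prop := H a = 0.

Definition pseudosimilar (a b : Cl2) : Prop :=
  exists u : Cl2, ~ inZ u /\ cl_mul a u = cl_mul (cl_bar u) b.

(* Main.v *)
Require Import Defs.
From Stdlib Require Import Reals.
From Stdlib Require Import Lra Psatz.
Open Scope R_scope.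

Lemma cl_ext (x y : Cl2) : Defs.c0 x = Defs.c0 y -> Defs.c1 x = Defs.c1 y -> Defs.c2 x = Defs.c2 y -> Defs.c3 x = Defs.c3 y -> x = y.
Proof. destruct x, y; simpl; intros; subst; reflexivity. Qed.

Lemma H_mul x y : H (cl_mul x y) = H x * H y.
Proof. destruct x, y; unfold H, cl_mul; simpl; ring. Qed.

Lemma H_bar x : H (cl_bar x) = H x.
Proof. destruct x; unfold H, cl_bar; simpl; ring. Qed.

Theorem theorem5p3 (a b : Cl2) (ha : a <> cl_zero) (hb : b <> cl_zero) :
  pseudosimilar a b <->
  (cl_add (cl_bar a) b = cl_zero \/
   (H a = H b /\ H (cl_add (cl_bar a) b) <> 0)).
Proof.
  split.
  - intros [u [Hu E]]. unfold inZ in Hu.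
    assert (Hab : H a = H b).
    { assert (HE := f_equal H E). rewrite !H_mul, H_bar in HE.
      apply (Rmult_eq_reg_r (H u)); auto. lra. }
    set (x := cl_add (cl_bar a) b).
    set (s := Defs.c0 (cl_mul a u)).
    assert (Ex : cl_mul (cl_bar u) x = mkCl2 (2 * s) 0 0 0).
    { assert (E' : cl_mul (cl_bar u) b = cl_mul a u) by (symmetry; exact E).
      destruct a as [a0 a1 a2 a3], b as [b0 b1 b2 b3], u as [u0 u1 u2 u3].
      unfold x, s; unfold cl_mul, cl_bar, cl_add in *; simpl in *.
      injection E'; intros F3 F2 F1 F0.
      apply cl_ext; simpl; lra. }
    destruct (Req_dec s 0) as [Hs | Hs].
    + left. fold x.
      assert (Hm := f_equal (cl_mul u) Ex).
      destruct x as [x0 x1 x2 x3], u as [u0 u1 u2 u3].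
      unfold H in Hu; unfold cl_mul, cl_bar in Hm; simpl in *.
      rewrite Hs in Hm. injection Hm; intros G3 G2 G1 G0.
      unfold cl_zero.
      assert (K0 : (u0^2 - u1^2 - u2^2 + u3^2) * x0 = 0) by nra.
      assert (K1 : (u0^2 - u1^2 - u2^2 + u3^2) * x1 = 0) by nra.
      assert (K2 : (u0^2 - u1^2 - u2^2 + u3^2) * x2 = 0) by nra.
      assert (K3 : (u0^2 - u1^2 - u2^2 + u3^2) * x3 = 0) by nra.
      apply Rmult_integral in K0; apply Rmult_integral in K1;
      apply Rmult_integral in K2; apply Rmult_integral in K3.
      destruct K0, K1, K2, K3; try contradiction; subst; reflexivity.
    + right. split; auto. fold x. intro Hx.
      assert (HE := f_equal H Ex). rewrite H_mul, H_bar, Hx in HE.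
      unfold H in HE; simpl in HE. nra.
  - intros [E | [Hab Hx]].
    + destruct a as [a0 a1 a2 a3].
      assert (Hb : b = mkCl2 (-a0) a1 a2 a3).
      { destruct b; unfold cl_add, cl_bar, cl_zero in E; simpl in E.
        injection E; intros; apply cl_ext; simpl; lra. }
      subst b.
      destruct (Req_dec (a0^2 + a3^2) 0) as [Z|Z].
      * assert (a0 = 0) by nra. assert (a3 = 0) by nra. subst.
        exists (mkCl2 0 a2 (-a1) 0). split.
        -- unfold inZ, H; simpl. intro C.
           apply ha. assert (a1 = 0) by nra. assert (a2 = 0) by nra. subst; reflexivity.
        -- unfold cl_mul, cl_bar; simpl; apply cl_ext; simpl; ring.
      * exists (mkCl2 a3 0 0 a0). split.
        -- unfold inZ, H; simpl. intro C. apply Z. nra.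
        -- unfold cl_mul, cl_bar; simpl; apply cl_ext; simpl; ring.
    + exists (cl_add (cl_bar a) b). split; [exact Hx|].
      destruct a as [a0 a1 a2 a3], b as [b0 b1 b2 b3].
      unfold H in Hab; unfold cl_mul, cl_bar, cl_add; simpl in *.
      apply cl_ext; simpl; nra.
Qed.
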